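(* Let $m=p_1^{\alpha_1}p_2^{\alpha_2}$, where $p_1,p_2>2$ are distinct primes and $\alpha_1,\alpha_2$ are positive integers. Let $t=\mathrm{ord}_m(2)$ and let $\gamma\in\mathbb{F}_{2^t}^*$ be a primitive $m$th root of unity. Let $E=\{e\in\mathbb{Z}: p_1^{\alpha_1}\nmid e,\ p_2^{\alpha_2}\nmid e\}$. Then $m$ is good if and only if there exist $u,v\in E$ with $u\not\equiv v\pmod m$ and $\det(A)=0$, where $$A=\begin{pmatrix}\gamma^{s_{01}u}&\gamma^{s_{01}v}&1\\ \gamma^{s_{10}u}&\gamma^{s_{10}v}&1\\ \gamma^{u}&\gamma^{v}&1\end{pmatrix}.$$
   Context: $\mathrm{ord}_m(2)$ is the multiplicative order of $2$ modulo $m$. The canonical set of $m$ is $S_m=\{s_{01},s_{10},s_{11}\}\subseteq\mathbb{Z}_m$, where for $\sigma=(\sigma_1,\sigma_2)\in\{0,1\}^2\setminus\{(0,0)\}$, $s_\sigma$ is the unique element of $\mathbb{Z}_m$ with $s_\sigma\equiv\sigma_1 \pmod{p_1^{\alpha_1}}$ and $s_\sigma\equiv \sigma_2\pmod{p_2^{\alpha_2}}$ (so $s_{11}=1$). An $S_m$-decoding polynomial is a polynomial $P(X)\in\mathbb{F}_{2^t}[X]$ such that $P(\gamma^s)=0$ for every $s\in S_m$ and $P(1)=1$. The number $m$ is called good if there exists an $S_m$-decoding polynomial with fewer than $4$ monomials (nonzero terms). *)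

(* Defs.v *)
From HB Require Import structures.
From mathcomp Require Import all_boot all_order all_algebra.
Set Implicit Arguments. Unset Strict Implicit. Unset Printing Implicit Defensive.
Import GRing.Theory Num.Theory.
Local Open Scope ring_scope.

Definition is_ord_mod (m a t : nat) : Prop :=
  (0 < t)%N /\ (a ^ t = 1 %[mod m])%N /\
  (forall k : nat, (0 < k)%N -> (a ^ k = 1 %[mod m])%N -> (t <= k)%N).

(* s_sigma for m = q1 * q2 (q1 = p1^a1, q2 = p2^a2 coprime): the unique
   element of Z_m (represented in [0, m)) congruent to r1 mod q1 and r2 mod q2 *)
Definition s_sig (q1 q2 r1 r2 : nat) : nat := (chinese q1 q2 r1 r2 %% (q1 * q2))%N.

Definition canon_set (q1 q2 : nat) : seq nat :=
  [:: s_sig q1 q2 0 1; s_sig q1 q2 1 0; s_sig q1 q2 1 1].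

Definition nmonomials (F : fieldType) (P : {poly F}) : nat :=
  count (fun c => c != 0) (polyseq P).

Definition decoding_poly (F : fieldType) (gamma : F) (q1 q2 : nat) (P : {poly F}) : Prop :=
  (forall s, s \in canon_set q1 q2 -> P.[gamma ^+ s] = 0) /\ P.[1] = 1.

Definition good (F : fieldType) (gamma : F) (q1 q2 : nat) : Prop :=
  exists P : {poly F}, decoding_poly gamma q1 q2 P /\ (nmonomials P < 4)%N.

Definition matA (F : fieldType) (gamma : F) (q1 q2 : nat) (u v : int) : 'M[F]_3 :=
  \matrix_(i < 3, j < 3)
    (let s := nth 0%N (canon_set q1 q2) i in
     if j == 0 :> nat then gamma ^ (s%:Z * u)
     else if j == 1 :> nat then gamma ^ (s%:Z * v)
     else 1).

Definition in_E (q1 q2 : nat) (e : int) : bool :=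
  ~~ (q1%:Z %| e)%Z && ~~ (q2%:Z %| e)%Z.

(* Main.v *)
Require Import Defs.
From HB Require Import structures.
From mathcomp Require Import all_boot all_order all_algebra.
From mathcomp Require Import ring.
Import GRing.Theory Num.Theory.
Local Open Scope ring_scope.

Lemma gz1 (F : fieldType) (g : F) (m : nat) (z : int) :
  m.-primitive_root g -> (g ^ z == 1) = (m%:Z %| z)%Z.
Proof.
move=> pr; case: z => n.
  by rewrite dvdzE /= -(prim_order_dvd pr).
rewrite NegzE -invr_expz invr_eq1 rpredN dvdzE /=.
by rewrite -(prim_order_dvd pr).
Qed.

Lemma gnz (F : fieldType) (g : F) (m : nat) :
  (0 < m)%N -> m.-primitive_root g -> g != 0.
Proof.
move=> m0 pr; apply/eqP => g0; have := prim_expr_order pr.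
by rewrite g0 expr0n eqn0Ngt m0 /= => /eqP; rewrite eq_sym oner_eq0.
Qed.

Lemma gzeq (F : fieldType) (g : F) (m : nat) (z w : int) :
  (0 < m)%N -> m.-primitive_root g -> (g ^ z == g ^ w) = (m%:Z %| z - w)%Z.
Proof.
move=> m0 pr; have nz := @gnz _ g m m0 pr.
rewrite -(@gz1 _ g m (z - w) pr).
have -> : g ^ z = g ^ (z - w) * g ^ w by rewrite -expfzDr // subrK.
have nw := expfz_neq0 w nz.
apply/eqP/eqP => [E|->]; last by rewrite mul1r.
by apply: (mulIf nw); rewrite mul1r.
Qed.

Lemma L1 (F : fieldType) (d1 d2 d3 A1 A2 A3 B1 B2 B3 : F) :
  d1 + d2 + d3 = 1 -> d1 * A1 + d2 * A2 + d3 * A3 = 0 ->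
  d1 * B1 + d2 * B2 + d3 * B3 = 0 ->
  d1 * (A1 * B1) + d2 * (A2 * B2) + d3 * (A3 * B3) = 0 ->
  A1 != 0 -> B3 != 0 -> A1 != A2.
Proof.
move=> hs ha hb hab a0 b0; apply/eqP => E; subst A2.
have h : d3 * B3 * (A3 - A1) = 0.
  have -> : d3 * B3 * (A3 - A1) =
     (d1 * (A1 * B1) + d2 * (A1 * B2) + d3 * (A3 * B3))
      - A1 * (d1 * B1 + d2 * B2 + d3 * B3) by ring.
  by rewrite hab hb; ring.
have key : d3 * A3 = d3 * A1.
  move/eqP: h; rewrite !mulf_eq0 (negbTE b0) orbF subr_eq0 => /orP [/eqP->|/eqP->].
    by rewrite !mul0r.
  by [].
move/eqP: a0; apply.
have -> : A1 = A1 * (d1 + d2 + d3) by rewrite hs mulr1.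
by rewrite -ha key; ring.
Qed.

Lemma L2 (F : fieldType) (d1 d2 d3 A1 A2 B1 B2 : F) :
  d1 * A1 + d2 * A2 + d3 = 0 -> d1 * B1 + d2 * B2 + d3 = 0 ->
  d1 * (A1 * B1) + d2 * (A2 * B2) + d3 = 0 -> d1 + d2 + d3 = 0 ->
  A1 != 1 -> A2 != 1 -> B1 != 1 -> (A1 != A2) || (B1 != B2) ->
  [/\ d1 = 0, d2 = 0 & d3 = 0].
Proof.
move=> ha hb hab hs a1 a2 b1 hne.
have hx : d1 * (A1 - 1) + d2 * (A2 - 1) = 0.
  have -> : d1 * (A1 - 1) + d2 * (A2 - 1) =
    (d1 * A1 + d2 * A2 + d3) - (d1 + d2 + d3) by ring.
  by rewrite ha hs subr0.
have hy : d1 * (A1 - 1) * (B1 - B2) = 0.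
  have -> : d1 * (A1 - 1) * (B1 - B2) =
    (d1 * (A1 * B1) + d2 * (A2 * B2) + d3) - (d1 * A1 + d2 * A2 + d3)
    - (d1 * B1 + d2 * B2 + d3) + (d1 + d2 + d3)
    - (B2 - 1) * (d1 * (A1 - 1) + d2 * (A2 - 1)) by ring.
  by rewrite ha hb hab hs hx; ring.
have fin : d1 = 0 -> [/\ d1 = 0, d2 = 0 & d3 = 0].
  move=> e1; move: hx; rewrite e1 mul0r add0r => /eqP.
  rewrite mulf_eq0 subr_eq0 (negbTE a2) orbF => /eqP e2.
  by split => //; move: hs; rewrite e1 e2 !add0r.
move/eqP: hy; rewrite !mulf_eq0 !subr_eq0 (negbTE a1) orbF => /orP [/eqP|/eqP eb].
  exact: fin.
move: hne; rewrite eb eqxx orbF => hne.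
have hd : (d1 + d2) * (B2 - 1) = 0.
  have -> : (d1 + d2) * (B2 - 1) = (d1 * B1 + d2 * B2 + d3) - (d1 + d2 + d3)
    by rewrite eb; ring.
  by rewrite hb hs subr0.
move/eqP: hd; rewrite mulf_eq0 subr_eq0 -eb (negbTE b1) orbF => /eqP hd.
apply: fin; apply/eqP.
have : d1 * (A1 - A2) = 0.
  have -> : d1 * (A1 - A2) = d1 * (A1 - 1) + d2 * (A2 - 1) - (d1 + d2) * (A2 - 1)
    by ring.
  by rewrite hx hd; ring.
by move/eqP; rewrite mulf_eq0 subr_eq0 (negbTE hne) orbF.
Qed.

Lemma nmon3 (F : fieldType) (P : {poly F}) (i j k : nat) :
  (forall n, n \notin [:: i; j; k] -> P`_n = 0) -> (nmonomials P <= 3)%N.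
Proof.
move=> H; rewrite /nmonomials -(mkseq_nth 0 P) /mkseq count_map.
rewrite -size_filter.
have -> : (3 = size [:: i; j; k])%N by [].
apply: uniq_leq_size; first by apply: filter_uniq; apply: iota_uniq.
move=> n; rewrite mem_filter => /andP [/= nz _].
by apply/negPn/negP => /H hn; rewrite hn eqxx in nz.
Qed.

Lemma aux (F : fieldType) (g : F) (q1 q2 : nat) (s01 s10 s11 : nat) :
 (0 < q1*q2)%N -> (q1*q2).-primitive_root g -> coprimez q1 q2 ->
 (q1%:Z %| s01%:Z)%Z -> (q2%:Z %| s01%:Z - 1)%Z ->
 (q1%:Z %| s10%:Z - 1)%Z -> (q2%:Z %| s10%:Z)%Z ->
 (q1%:Z %| s11%:Z - 1)%Z -> (q2%:Z %| s11%:Z - 1)%Z ->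
 (exists P : {poly F}, ((forall s, s \in [:: s01; s10; s11] -> P.[g ^+ s] = 0)
     /\ P.[1] = 1) /\ (nmonomials P < 4)%N)
 <-> exists u v : int, [/\ ~~ (q1%:Z %| u)%Z && ~~ (q2%:Z %| u)%Z,
      ~~ (q1%:Z %| v)%Z && ~~ (q2%:Z %| v)%Z,
      (u != v %[mod (q1*q2)%N])%Z &
      \det (\matrix_(i < 3, j < 3) (let s := nth 0%N [:: s01; s10; s11] i in
          if j == 0 :> nat then g ^ (s%:Z * u)
          else if j == 1 :> nat then g ^ (s%:Z * v) else 1)) = 0].
Proof.
move=> m0 pr cop d1a d1b d2a d2b d3a d3b.
have nz := @gnz _ g _ m0 pr.
have mdiv z : ((q1*q2)%N%:Z %| z)%Z = (q1%:Z %| z)%Z && (q2%:Z %| z)%Z.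
  by rewrite PoszM Gauss_dvdz.
have geq z w : (g ^ z == g ^ w) = (q1%:Z %| z - w)%Z && (q2%:Z %| z - w)%Z.
  by rewrite (@gzeq _ g _ z w m0 pr) mdiv.
have split3 z : g ^ (s11%:Z * z) = g ^ (s01%:Z * z) * g ^ (s10%:Z * z).
  rewrite -expfzDr //; apply/eqP; rewrite geq; apply/andP; split.
    have -> : s11%:Z * z - (s01%:Z * z + s10%:Z * z) =
       ((s11%:Z - 1) - s01%:Z - (s10%:Z - 1)) * z by ring.
    by apply: dvdz_mulr; apply: rpredB; [apply: rpredB|].
  have -> : s11%:Z * z - (s01%:Z * z + s10%:Z * z) =
     ((s11%:Z - 1) - (s01%:Z - 1) - s10%:Z) * z by ring.
  by apply: dvdz_mulr; apply: rpredB; [apply: rpredB|].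
have powE (s e : nat) : (g ^+ s) ^+ e = g ^ (s%:Z * e%:Z).
  by rewrite -exprM -PoszM.
have modE (s : nat) (z : int) :
    (g ^+ s) ^+ `|(z %% (q1 * q2)%N)%Z|%N = g ^ (s%:Z * z).
  have Mn0 : ((q1 * q2)%N : int) != 0 by rewrite eqz_nat -lt0n.
  rewrite powE gez0_abs ?modz_ge0 //; apply/eqP; rewrite geq.
  set M := ((q1 * q2)%N : int); set r := (z %% M)%Z; set k := (z %/ M)%Z.
  have hz : z = k * M + r by exact: divz_eq.
  have -> : s%:Z * r - s%:Z * z = - (s%:Z * k) * M.
    by transitivity (s%:Z * r - s%:Z * (k * M + r)); [rewrite -hz | ring].
  rewrite /M PoszM; apply/andP; split; apply: dvdz_mull.
    by apply: dvdz_mulr; apply: dvdzz.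
  by apply: dvdz_mull; apply: dvdzz.
have unit_ne (s z : int) (q : nat) :
    (q%:Z %| s - 1)%Z -> ~~ (q%:Z %| z)%Z -> ~~ (q%:Z %| s * z)%Z.
  move=> e1 e2; apply: contra e2 => e3.
  have -> : z = s * z - (s - 1) * z by ring.
  by apply: rpredB => //; apply: dvdz_mulr.
split.
  move=> [P [[hz h1] hm]].
  have [S [hS hev]] : exists S : seq nat, size S = nmonomials P /\
      forall x, P.[x] = \sum_(n <- S) P`_n * x ^+ n.
    exists [seq n <- index_iota 0 (size P) | P`_n != 0]; split.
      by rewrite /index_iota subn0 size_filter /nmonomials -[in RHS](mkseq_nth 0 P) /mkseq count_map.
    move=> x; rewrite horner_coef big_filter big_mkord [RHS]big_mkcond /=.
    apply: eq_bigr => i _; case: ifP => // /negbFE/eqP ->; by rewrite mul0r.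
  have [c1 [c2 [c3 [e1 [e2 [e3 hP]]]]]] : exists c1 c2 c3 (e1 e2 e3 : nat),
      forall x, P.[x] = c1 * x ^+ e1 + c2 * x ^+ e2 + c3 * x ^+ e3.
    move: hm; rewrite -hS; case: S hev hS => [|n1 [|n2 [|n3 [|n4 S']]]] //= hev _ _.
    - by exists 0, 0, 0, 0%N, 0%N, 0%N => x; rewrite hev big_nil; ring.
    - by exists P`_n1, 0, 0, n1, 0%N, 0%N => x; rewrite hev big_cons big_nil; ring.
    - by exists P`_n1, P`_n2, 0, n1, n2, 0%N => x; rewrite hev !big_cons big_nil; ring.
    - by exists P`_n1, P`_n2, P`_n3, n1, n2, n3 => x; rewrite hev !big_cons big_nil; ring.
  have hv s : s \in [:: s01; s10; s11] ->
      c1 * g ^ (s%:Z * e1%:Z) + c2 * g ^ (s%:Z * e2%:Z) + c3 * g ^ (s%:Z * e3%:Z) = 0.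
    by move=> hs; rewrite -!powE -hP; exact: hz.
  have Hs : c1 + c2 + c3 = 1 by rewrite -h1 hP !expr1n !mulr1.
  have ha := hv s01 (mem_head _ _).
  have hb := hv s10 (ltac:(by rewrite !inE eqxx orbT) : s10 \in [:: s01; s10; s11]).
  have hab := hv s11 (ltac:(by rewrite !inE eqxx !orbT) : s11 \in [:: s01; s10; s11]).
  rewrite !split3 in hab.
  have nzA (s : nat) (e : nat) : g ^ (s%:Z * e%:Z) != 0 by apply: expfz_neq0.
  set a1 := g ^ (s01%:Z * e1%:Z) in ha hab *; set a2 := g ^ (s01%:Z * e2%:Z) in ha hab *.
  set a3 := g ^ (s01%:Z * e3%:Z) in ha hab *; set b1 := g ^ (s10%:Z * e1%:Z) in hb hab *.
  set b2 := g ^ (s10%:Z * e2%:Z) in hb hab *; set b3 := g ^ (s10%:Z * e3%:Z) in hb hab *.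
  have A12 : a1 != a2 := @L1 _ c1 c2 c3 a1 a2 a3 b1 b2 b3 Hs ha hb hab (nzA _ _) (nzA _ _).
  have A13 : a1 != a3.
    apply: (@L1 _ c1 c3 c2 a1 a3 a2 b1 b3 b2 _ _ _ _ (nzA s01 e1) (nzA s10 e2)).
    - by rewrite -Hs; ring.
    - by rewrite -ha; ring.
    - by rewrite -hb; ring.
    - by rewrite -hab; ring.
  have A23 : a2 != a3.
    apply: (@L1 _ c2 c3 c1 a2 a3 a1 b2 b3 b1 _ _ _ _ (nzA s01 e2) (nzA s10 e1)).
    - by rewrite -Hs; ring.
    - by rewrite -ha; ring.
    - by rewrite -hb; ring.
    - by rewrite -hab; ring.
  have B13 : b1 != b3.
    apply: (@L1 _ c1 c3 c2 b1 b3 b2 a1 a3 a2 _ _ _ _ (nzA s10 e1) (nzA s01 e2)).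
    - by rewrite -Hs; ring.
    - by rewrite -hb; ring.
    - by rewrite -ha; ring.
    - by rewrite -hab; ring.
  have B23 : b2 != b3.
    apply: (@L1 _ c2 c3 c1 b2 b3 b1 a2 a3 a1 _ _ _ _ (nzA s10 e2) (nzA s01 e1)).
    - by rewrite -Hs; ring.
    - by rewrite -hb; ring.
    - by rewrite -ha; ring.
    - by rewrite -hab; ring.
  rewrite /a1 /a2 /a3 /b1 /b2 /b3 in A12 A13 A23 B13 B23 *.
  exists (e1%:Z - e3%:Z), (e2%:Z - e3%:Z); split.
  - apply/andP; split; apply/negP => hq.
      move/negP: B13; apply; rewrite geq -mulrBr; apply/andP; split.
        exact: dvdz_mull.
      exact: dvdz_mulr.
    move/negP: A13; apply; rewrite geq -mulrBr; apply/andP; split.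
      exact: dvdz_mulr.
    exact: dvdz_mull.
  - apply/andP; split; apply/negP => hq.
      move/negP: B23; apply; rewrite geq -mulrBr; apply/andP; split.
        exact: dvdz_mull.
      exact: dvdz_mulr.
    move/negP: A23; apply; rewrite geq -mulrBr; apply/andP; split.
      exact: dvdz_mulr.
    exact: dvdz_mull.
  - rewrite eqz_mod_dvd mdiv; apply/negP => /andP [hq1 hq2].
    move/negP: A12; apply; rewrite geq -mulrBr.
    have -> : e1%:Z - e2%:Z = e1%:Z - e3%:Z - (e2%:Z - e3%:Z) by ring.
    by apply/andP; split; [apply: dvdz_mulr | apply: dvdz_mull].
  rewrite -det_tr; apply/eqP/det0P.
  exists (\row_(j < 3) [:: c1; c2; c3]`_j).
    apply/negP => /eqP/rowP h0.
    have := h0 ord0; have := h0 (lift ord0 ord0); have := h0 (lift ord0 (lift ord0 ord0)).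
    rewrite !mxE /= => z3 z2 z1; move: Hs; rewrite z1 z2 z3 !addr0 => /eqP.
    by rewrite eq_sym oner_eq0.
  have rowz (s : nat) : s \in [:: s01; s10; s11] ->
      c1 * g ^ (s%:Z * (e1%:Z - e3%:Z)) + (c2 * g ^ (s%:Z * (e2%:Z - e3%:Z)) + (c3 * 1 + 0)) = 0.
    move=> hs; have := hv s hs.
    rewrite !mulrBr !expfzDr // -!mulNr !mulNr -!invr_expz.
    set X1 := g ^ (s%:Z * e1%:Z); set X2 := g ^ (s%:Z * e2%:Z).
    set X3 := g ^ (s%:Z * e3%:Z) => H.
    have X3n : X3 != 0 by apply: expfz_neq0.
    have -> : c1 * (X1 * X3^-1) + (c2 * (X2 * X3^-1) + (c3 * 1 + 0))
       = (c1 * X1 + c2 * X2 + c3 * X3) / X3 by field.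
    by rewrite H mul0r.
  apply/rowP => i; rewrite !mxE !big_ord_recl !big_ord0 !mxE /=.
  case: i => -[|[|[|i]]] hi //=.
  - by apply: rowz; rewrite inE eqxx.
  - by apply: rowz; rewrite !inE eqxx orbT.
  - by apply: rowz; rewrite !inE eqxx !orbT.
move=> [u [v [Eu Ev Nuv]]] /eqP D.
rewrite -det_tr in D; case/det0P: D => w wn0 hw.
have row (i : 'I_3) := congr1 (fun M : 'rV[F]_3 => M 0 i) hw.
have := row 0; have := row 1; have := row 2.
rewrite !mxE !big_ord_recl !big_ord0 !mxE /= !mulr1 !addr0.
set c1 := w 0 ord0; set c2 := w 0 (lift ord0 ord0).
set c3 := w 0 (lift ord0 (lift ord0 ord0)).
rewrite !split3 !addrA => h3 h2 h1.
case/andP: Eu => Eu1 Eu2; case/andP: Ev => Ev1 Ev2.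
have Au : g ^ (s01%:Z * u) != 1.
  rewrite -[1](expr0z g) geq !subr0; apply/negP => /andP [_].
  by apply/negP; apply: unit_ne.
have Av : g ^ (s01%:Z * v) != 1.
  rewrite -[1](expr0z g) geq !subr0; apply/negP => /andP [_].
  by apply/negP; apply: unit_ne.
have Bu : g ^ (s10%:Z * u) != 1.
  rewrite -[1](expr0z g) geq !subr0; apply/negP => /andP [+ _].
  by apply/negP; apply: unit_ne.
have hne : (g ^ (s01%:Z * u) != g ^ (s01%:Z * v)) ||
           (g ^ (s10%:Z * u) != g ^ (s10%:Z * v)).
  rewrite -negb_and; apply/negP; case/andP; rewrite !geq.
  move=> /andP [ha1 ha2] /andP [hb1 hb2].
  move: Nuv; rewrite eqz_mod_dvd mdiv; apply/negP; apply/negPn/andP; split.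
    have -> : u - v = (s10%:Z * u - s10%:Z * v) - (s10%:Z - 1) * (u - v) by ring.
    by apply: rpredB => //; apply: dvdz_mulr.
  have -> : u - v = (s01%:Z * u - s01%:Z * v) - (s01%:Z - 1) * (u - v) by ring.
  by apply: rpredB => //; apply: dvdz_mulr.
have S0 : c1 + c2 + c3 != 0.
  apply/eqP => hs.
  have [e1 e2 e3] := @L2 _ _ _ _ _ _ _ _ h1 h2 h3 hs Au Av Bu hne.
  move/negP: wn0; apply; apply/eqP/rowP => j; rewrite mxE.
  case: j => -[|[|[|j]]] hj //.
  - by rewrite (_ : Ordinal hj = ord0) //; apply: val_inj.
  - by rewrite (_ : Ordinal hj = lift ord0 ord0) //; apply: val_inj.
  - by rewrite (_ : Ordinal hj = lift ord0 (lift ord0 ord0)) //; apply: val_inj.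
pose nu := `|(u %% (q1 * q2)%N)%Z|%N; pose nv := `|(v %% (q1 * q2)%N)%Z|%N.
exists ((c1 + c2 + c3)^-1 *: (c1 *: 'X^nu + c2 *: 'X^nv + c3%:P)).
split; [split|].
- move=> s; rewrite !inE => /or3P [] /eqP ->; rewrite !hornerE /nu /nv !modE.
  + by rewrite h1 mulr0.
  + by rewrite h2 mulr0.
  + by rewrite !split3 h3 mulr0.
- by rewrite !hornerE !expr1n !mulr1 mulVf.
- apply: (@leq_ltn_trans 3); last by [].
  apply: (@nmon3 _ _ nu nv 0%N) => n.
  rewrite !inE => /norP [/negbTE e1 /norP [/negbTE e2 /negbTE e3]].
  by rewrite coefZ !coefD !coefZ !coefXn coefC e1 e2 e3 !mulr0 !addr0 mulr0.
Qed.

Theorem lemma5 (p1 p2 a1 a2 t : nat) (F : finFieldType) (gamma : F) :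
  prime p1 -> prime p2 -> (2 < p1)%N -> (2 < p2)%N -> p1 != p2 ->
  (0 < a1)%N -> (0 < a2)%N ->
  is_ord_mod (p1 ^ a1 * p2 ^ a2) 2 t ->
  #|F| = (2 ^ t)%N ->
  (p1 ^ a1 * p2 ^ a2)%N.-primitive_root gamma ->
  good gamma (p1 ^ a1) (p2 ^ a2) <->
  exists u v : int,
    [/\ in_E (p1 ^ a1) (p2 ^ a2) u, in_E (p1 ^ a1) (p2 ^ a2) v,
        (u != v %[mod (p1 ^ a1 * p2 ^ a2)%N])%Z &
        \det (matA gamma (p1 ^ a1) (p2 ^ a2) u v) = 0].
Proof.
move=> pp1 pp2 _ _ pne _ _ _ _ pr.
have cop : coprime (p1 ^ a1) (p2 ^ a2).
  rewrite coprimeXl // coprime_sym coprimeXl // prime_coprime // dvdn_prime2 //.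
  by rewrite eq_sym.
have copz : coprimez (p1 ^ a1)%N (p2 ^ a2)%N by [].
have m0 : (0 < p1 ^ a1 * p2 ^ a2)%N by rewrite muln_gt0 !expn_gt0 !prime_gt0.
have sl r1 r2 : ((p1 ^ a1)%N%:Z %| (s_sig (p1 ^ a1) (p2 ^ a2) r1 r2)%:Z - r1%:Z)%Z.
  rewrite -eqz_mod_dvd !modz_nat; apply/eqP; congr Posz.
  by rewrite /s_sig modn_dvdm ?dvdn_mulr // chinese_modl.
have sr r1 r2 : ((p2 ^ a2)%N%:Z %| (s_sig (p1 ^ a1) (p2 ^ a2) r1 r2)%:Z - r2%:Z)%Z.
  rewrite -eqz_mod_dvd !modz_nat; apply/eqP; congr Posz.
  by rewrite /s_sig modn_dvdm ?dvdn_mull // chinese_modr.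
have := sl 0%N 1%N; have := sr 1%N 0%N; rewrite !subr0 => h1 h2.
rewrite /good /decoding_poly /matA /canon_set /in_E.
exact: (aux _ _ _ _ _ _ _ m0 pr copz h2 (sr 0%N 1%N) (sl 1%N 0%N) h1 (sl 1%N 1%N) (sr 1%N 1%N)).
Qed.
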